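(* Let $N$ and $M$ be $G$-graded near-rings with multiplicative identity. If every proper ideal of $N$ and every proper ideal of $M$ is a product of graded prime ideals, then every proper ideal of $N\times M$ is a product of graded prime ideals of $N\times M$.
   Context: A (right) near-ring is a set $N$ with two binary operations $+$ and $\cdot$ such that $(N,+)$ is a group (not necessarily abelian), $(N,\cdot)$ is a semigroup, and $(a+b)c=ac+bc$. An ideal of $N$ is a normal subgroup $I$ of $(N,+)$ such that $ni\in I$ and $(n+i)m-nm\in I$ for all $n,m\in N$, $i\in I$. For ideals $A_1,\dots,A_n$, the product $A_1\cdots A_n$ is the set of products $\{a_1\cdots a_n: a_i\in A_i\}$. Let $G$ be a multiplicative monoid with identity. $N$ is $G$-graded if there is a family $\{N_\sigma\}_{\sigma\in G}$ of normal subgroups of $(N,+)$ with $N=\bigoplus_{\sigma\in G}N_\sigma$ and $N_\sigma N_\tau\subseteq N_{\sigma\tau}$. For $X\subseteq N$, $X_g=X\cap N_g$. An ideal $I$ is graded if $I=\bigoplus_g I_g$. The direct product $N\times M$ has componentwise operations and is $G$-graded by $(N\times M)_g=N_g\times M_g$. For subsets $X,Y$, $XY=\{xy:x\in X,y\in Y\}$. A graded ideal $P$ is graded prime if $P\neq N$ and for all ideals $A,B$ of $N$ and all $g,h\in G$: $A_gB_h\subseteq P_{gh}$ implies $A_g\subseteq P_g$ or $B_h\subseteq P_h$. *)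

(* Defs.v *)
From Stdlib Require Import List.
Import ListNotations.
Set Implicit Arguments.
Unset Strict Implicit.

Record monoid := Monoid {
  mcar :> Type;
  mop : mcar -> mcar -> mcar;
  mone : mcar;
  mopA : forall a b c, mop a (mop b c) = mop (mop a b) c;
  mop1l : forall a, mop mone a = a;
  mop1r : forall a, mop a mone = a
}.

Record nearring := NearRing {
  nr :> Type;
  nadd : nr -> nr -> nr;
  nopp : nr -> nr;
  nzero : nr;
  nmul : nr -> nr -> nr;
  none : nr;
  naddA : forall a b c, nadd a (nadd b c) = nadd (nadd a b) c;
  nadd0l : forall a, nadd nzero a = a;
  nadd0r : forall a, nadd a nzero = a;
  naddNl : forall a, nadd (nopp a) a = nzero;
  naddNr : forall a, nadd a (nopp a) = nzero;
  nmulA : forall a b c, nmul a (nmul b c) = nmul (nmul a b) c;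
  nmulDl : forall a b c, nmul (nadd a b) c = nadd (nmul a c) (nmul b c);
  nmul1l : forall a, nmul none a = a;
  nmul1r : forall a, nmul a none = a
}.

Section Defs.
Variable N : nearring.

Definition nsum (l : list N) : N := fold_right (@nadd N) (@nzero N) l.

Definition normal_subgroup (I : N -> Prop) : Prop :=
  I (@nzero N) /\
  (forall a b, I a -> I b -> I (nadd a b)) /\
  (forall a, I a -> I (nopp a)) /\
  (forall n i, I i -> I (nadd (nadd n i) (nopp n))).

Definition ideal (I : N -> Prop) : Prop :=
  normal_subgroup I /\
  (forall n i, I i -> I (nmul n i)) /\
  (forall n m i, I i -> I (nadd (nmul (nadd n i) m) (nopp (nmul n m)))).

Definition proper (I : N -> Prop) : Prop := ~ (forall x, I x).

Variable G : monoid.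

(* N = (+)_{g in G} N_g : every element is a finite sum of homogeneous
   components with distinct degrees, and such an expression is unique
   (independence: a sum of homogeneous elements of distinct degrees is 0
   only if all of them are 0). *)
Definition graded (Ng : G -> N -> Prop) : Prop :=
  (forall g, normal_subgroup (Ng g)) /\
  (forall x, exists l : list (G * N),
       NoDup (map fst l) /\ Forall (fun p => Ng (fst p) (snd p)) l /\
       x = nsum (map snd l)) /\
  (forall l : list (G * N),
       NoDup (map fst l) -> Forall (fun p => Ng (fst p) (snd p)) l ->
       nsum (map snd l) = nzero N -> Forall (fun p => snd p = nzero N) l) /\
  (forall g h a b, Ng g a -> Ng h b -> Ng (mop g h) (nmul a b)).

Variable Ng : G -> N -> Prop.

Definition hom (X : N -> Prop) (g : G) : N -> Prop := fun x => X x /\ Ng g x.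

Definition graded_ideal (I : N -> Prop) : Prop :=
  ideal I /\
  forall x, I x -> exists l : list (G * N),
       NoDup (map fst l) /\ Forall (fun p => hom I (fst p) (snd p)) l /\
       x = nsum (map snd l).

Definition graded_prime (P : N -> Prop) : Prop :=
  graded_ideal P /\ proper P /\
  forall (A B : N -> Prop) (g h : G), ideal A -> ideal B ->
    (forall a b, hom A g a -> hom B h b -> hom P (mop g h) (nmul a b)) ->
    (forall a, hom A g a -> hom P g a) \/ (forall b, hom B h b -> hom P h b).

Fixpoint prodset (l : list (N -> Prop)) : N -> Prop :=
  match l with
  | [] => fun x => x = none N
  | A :: l' => fun x => exists a b, A a /\ prodset l' b /\ x = nmul a b
  end.

Definition prod_of_graded_primes (I : N -> Prop) : Prop :=
  exists (P : N -> Prop) (Ps : list (N -> Prop)),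
    Forall graded_prime (P :: Ps) /\ forall x, I x <-> prodset (P :: Ps) x.

End Defs.

Section Prod.
Variables N M : nearring.

Definition prod_nearring : nearring.
Proof.
refine (@NearRing (N * M)%type
  (fun x y => (nadd (fst x) (fst y), nadd (snd x) (snd y)))
  (fun x => (nopp (fst x), nopp (snd x)))
  (nzero N, nzero M)
  (fun x y => (nmul (fst x) (fst y), nmul (snd x) (snd y)))
  (none N, none M) _ _ _ _ _ _ _ _ _);
  intros; simpl;
  repeat match goal with p : (_ * _)%type |- _ => destruct p end; simpl;
  f_equal; auto using naddA, nadd0l, nadd0r, naddNl, naddNr, nmulA, nmulDl,
    nmul1l, nmul1r.
Defined.

Variable G : monoid.
Definition prod_grading (Ng : G -> N -> Prop) (Mg : G -> M -> Prop)
  : G -> prod_nearring -> Prop :=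
  fun g x => Ng g (fst x) /\ Mg g (snd x).
End Prod.

(* Main.v *)
Require Import Defs.
From Stdlib Require Import List Classical ClassicalEpsilon.
Import ListNotations.
Set Implicit Arguments.

Section Basic.
Variable N : nearring.

Lemma cancel_r (x y : N) : x = nadd x y -> y = nzero N.
Proof.
  intro H. transitivity (nadd (nadd (nopp x) x) y).
  rewrite naddNl, nadd0l; auto. rewrite <- naddA, <- H. apply naddNl.
Qed.

Lemma nmul0l (m : N) : nmul (nzero N) m = nzero N.
Proof.
  apply (@cancel_r (nmul (nzero N) m)). rewrite <- nmulDl, nadd0l. reflexivity.
Qed.

Lemma nopp0 : nopp (nzero N) = nzero N.
Proof. rewrite <- (nadd0l (nopp (nzero N))). apply naddNr. Qed.

Lemma ideal_mulr (I : N -> Prop) i m : ideal I -> I i -> I (nmul i m).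
Proof.
  intros [_ [_ H]] Hi. specialize (H (nzero N) m i Hi).
  rewrite nadd0l, nmul0l, nopp0, nadd0r in H. exact H.
Qed.

Lemma ideal_mull (I : N -> Prop) n i : ideal I -> I i -> I (nmul n i).
Proof. intros [_ [H _]] Hi. auto. Qed.

Variable G : monoid.
Variable Ng : G -> N -> Prop.
Hypothesis HG : graded Ng.

Lemma g0 g : Ng g (nzero N).
Proof. destruct HG as [H _]. apply (H g). Qed.

Lemma inter0 g h z : g <> h -> Ng g z -> Ng h z -> z = nzero N.
Proof.
  intros Hgh Hg Hh. destruct HG as [Hn [_ [Hi _]]].
  assert (Hz := Hi [(g,z);(h,nopp z)]).
  simpl in Hz.
  assert (Forall (fun p : G * N => snd p = nzero N) [(g, z); (h, nopp z)]).
  { apply Hz.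
    - constructor. simpl. intros [E|[]]. congruence. constructor. intros []. constructor.
    - constructor. exact Hg. constructor. simpl. apply (Hn h). exact Hh. constructor.
    - unfold nsum. simpl. rewrite nadd0r. apply naddNr. }
  inversion H; auto.
Qed.

Lemma commute g h a b : g <> h -> Ng g a -> Ng h b -> nadd a b = nadd b a.
Proof.
  intros Hgh Ha Hb. destruct HG as [Hn _].
  assert (E : nadd (nadd (nadd a b) (nopp a)) (nopp b) = nzero N).
  { apply (@inter0 h g). auto.
    - apply (Hn h). apply (Hn h). auto. apply (Hn h). auto.
    - replace (nadd (nadd (nadd a b) (nopp a)) (nopp b))
        with (nadd a (nadd (nadd b (nopp a)) (nopp b))).
      apply (Hn g). auto. apply (Hn g). apply (Hn g). auto.
      rewrite !naddA. reflexivity. }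
  assert (E2 : nadd (nadd (nadd (nadd (nadd a b) (nopp a)) (nopp b)) b) a = nadd b a).
  { rewrite E, nadd0l. reflexivity. }
  rewrite <- E2. rewrite <- (naddA _ (nopp b) b), naddNl, nadd0r, <- (naddA _ (nopp a) a), naddNl, nadd0r. reflexivity.
Qed.

Definition geq (g h : G) : {g = h} + {g <> h} := excluded_middle_informative _.

Fixpoint comp (l : list (G * N)) (g : G) : N :=
  match l with
  | [] => nzero N
  | (h, a) :: t => if geq h g then a else comp t g
  end.

Definition rem (l : list (G * N)) g :=
  filter (fun p => if geq (fst p) g then false else true) l.

Lemma rem_in l g h : In h (map fst (rem l g)) <-> In h (map fst l) /\ h <> g.
Proof.
  induction l as [|[k a] t IH]; simpl. tauto.
  destruct (geq k g); simpl; rewrite IH; split; intuition congruence.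
Qed.

Lemma rem_nodup l g : NoDup (map fst l) -> NoDup (map fst (rem l g)).
Proof.
  induction l as [|[k a] t IH]; simpl; intro H. constructor.
  inversion H; subst. destruct (geq k g); simpl; auto.
  constructor; auto. rewrite rem_in. tauto.
Qed.

Lemma rem_sub l g p : In p (rem l g) -> In p l.
Proof. unfold rem. rewrite filter_In. tauto. Qed.

Lemma comp_rem l g h : h <> g -> comp (rem l g) h = comp l h.
Proof.
  intro Hhg. induction l as [|[k a] t IH]; simpl. auto.
  destruct (geq k g); simpl.
  - destruct (geq k h); [congruence| auto].
  - destruct (geq k h); auto.
Qed.

Lemma rem_notin l g : ~ In g (map fst l) -> rem l g = l.
Proof.
  induction l as [|[k a] t IH]; simpl; intro H. auto.
  destruct (geq k g). exfalso; auto. f_equal. auto.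
Qed.

Lemma comp_prop (S : N -> Prop) l g :
  S (nzero N) -> (forall p, In p l -> fst p = g -> S (snd p)) -> S (comp l g).
Proof.
  intros H0 H. induction l as [|[k a] t IH]; simpl. auto.
  destruct (geq k g). apply (H (k,a)); simpl; auto.
  apply IH. intros; apply H; simpl; auto.
Qed.

Lemma pull l g : NoDup (map fst l) -> Forall (fun p => Ng (fst p) (snd p)) l ->
  nsum (map snd l) = nadd (comp l g) (nsum (map snd (rem l g))).
Proof.
  induction l as [|[k a] t IH]; simpl; intros Hn Hf.
  - unfold nsum; simpl. rewrite nadd0l. auto.
  - inversion Hn; subst. inversion Hf; subst. simpl in *.
    destruct (geq k g).
    + subst. rewrite rem_notin; auto.
    + simpl. unfold nsum in *. simpl. rewrite IH; auto.
      rewrite naddA, (@commute k g a (comp t g)); auto. rewrite naddA. auto.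
      apply comp_prop. apply g0. intros p Hp E. subst g.
      rewrite Forall_forall in H4. apply (H4 p Hp).
Qed.

Lemma decomp D l : NoDup D -> NoDup (map fst l) -> Forall (fun p => Ng (fst p) (snd p)) l ->
  (forall g, In g (map fst l) -> In g D) ->
  nsum (map snd l) = nsum (map (comp l) D).
Proof.
  revert l; induction D as [|g D IH]; intros l HD Hn Hf Hi.
  - destruct l as [|p l]. auto. exfalso. apply (Hi (fst p)). simpl; auto.
  - inversion HD; subst. rewrite (pull g Hn Hf). simpl. unfold nsum at 2. simpl. f_equal.
    rewrite IH; auto.
    + unfold nsum. f_equal. apply map_ext_in. intros h Hh. apply comp_rem. congruence.
    + apply rem_nodup; auto.
    + rewrite Forall_forall in *. intros p Hp. apply Hf. eapply rem_sub; eauto.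
    + intros h Hh. rewrite rem_in in Hh. destruct Hh as [Hh1 Hh2].
      destruct (Hi h Hh1); [congruence | auto].
Qed.

End Basic.
Section Prod.
Variables (G : monoid) (N M : nearring) (Ng : G -> N -> Prop) (Mg : G -> M -> Prop).
Hypothesis HN : graded Ng.
Hypothesis HM : graded Mg.
Notation NM := (prod_nearring N M).

Lemma nsum_pair (D : list G) (f : G -> N) (h : G -> M) :
  nsum (map (fun g => ((f g, h g) : NM)) D) = (nsum (map f D), nsum (map h D)).
Proof. induction D as [|g D IH]. reflexivity. change (nsum (map (fun g => ((f g, h g) : NM)) (g :: D))) with (nadd ((f g, h g) : NM) (nsum (map (fun g => ((f g, h g) : NM)) D))). rewrite IH. reflexivity. Qed.

Lemma gi_prod (R : NM -> Prop) (P : N -> Prop) (Q : M -> Prop) :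
  (forall z, R z <-> P (fst z) /\ Q (snd z)) -> ideal R ->
  graded_ideal Ng P -> graded_ideal Mg Q -> graded_ideal (prod_grading Ng Mg) R.
Proof.
  intros HR HI [HP1 HP2] [HQ1 HQ2]. split; auto.
  intros [x y] Hxy. apply HR in Hxy. destruct Hxy as [Hx Hy]. simpl in *.
  destruct (HP2 x Hx) as [l1 [Hn1 [Hf1 E1]]].
  destruct (HQ2 y Hy) as [l2 [Hn2 [Hf2 E2]]].
  set (D := nodup (@geq G) (map fst l1 ++ map fst l2)).
  assert (HD : NoDup D) by apply NoDup_nodup.
  exists (map (fun g => (g, ((comp N G l1 g, comp M G l2 g) : NM))) D).
  rewrite map_map. simpl. rewrite map_id. split; [auto|split].
  - rewrite Forall_forall. intros p Hp. rewrite in_map_iff in Hp.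
    destruct Hp as [g [<- _]]. simpl. split; [apply HR; simpl; split|split; simpl].
    + apply comp_prop. apply HP1. intros p Hp _. rewrite Forall_forall in Hf1. apply (Hf1 p Hp).
    + apply comp_prop. apply HQ1. intros p Hp _. rewrite Forall_forall in Hf2. apply (Hf2 p Hp).
    + apply comp_prop. apply (g0 HN). intros p Hp <-. rewrite Forall_forall in Hf1. apply (Hf1 p Hp).
    + apply comp_prop. apply (g0 HM). intros p Hp <-. rewrite Forall_forall in Hf2. apply (Hf2 p Hp).
  - rewrite map_map. simpl. rewrite nsum_pair. f_equal.
    + rewrite E1. apply (decomp HN); auto.
      rewrite Forall_forall in *. intros p Hp. apply (Hf1 p Hp).
      intros g Hg. unfold D. rewrite nodup_In. apply in_or_app; auto.
    + rewrite E2. apply (decomp HM); auto.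
      rewrite Forall_forall in *. intros p Hp. apply (Hf2 p Hp).
      intros g Hg. unfold D. rewrite nodup_In. apply in_or_app; auto.
Qed.

Lemma full_gi_N : graded_ideal Ng (fun _ : N => True).
Proof.
  split. repeat split; auto.
  intros x _. destruct HN as [_ [H _]]. destruct (H x) as [l [A [B C]]].
  exists l. split; auto. split; auto. rewrite Forall_forall in *. intros p Hp. split; auto.
Qed.

Lemma full_gi_M : graded_ideal Mg (fun _ : M => True).
Proof.
  split. repeat split; auto.
  intros x _. destruct HM as [_ [H _]]. destruct (H x) as [l [A [B C]]].
  exists l. split; auto. split; auto. rewrite Forall_forall in *. intros p Hp. split; auto.
Qed.

Lemma proj1_ideal (A : NM -> Prop) : ideal A -> ideal (fun x => A (x, nzero M)).
Proof.
  intros HA. assert (HA' := HA). destruct HA' as [[H0 [Hadd [Hopp Hconj]]] [Hl Hr]].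
  split; [split; [|split; [|split]]|split].
  - exact H0.
  - intros a b Ha Hb. assert (X := Hadd _ _ Ha Hb). simpl in X. rewrite nadd0l in X. exact X.
  - intros a Ha. assert (X := Hopp _ Ha). simpl in X. rewrite nopp0 in X. exact X.
  - intros n i Hi. assert (X := Hconj (n, nzero M) _ Hi). simpl in X.
    rewrite nadd0l, nadd0l, nopp0 in X. exact X.
  - intros n i Hi. assert (X := Hl (n, nzero M) _ Hi). simpl in X. rewrite nmul0l in X. exact X.
  - intros n m i Hi. assert (X := Hr (n, nzero M) (m, nzero M) _ Hi). simpl in X.
    rewrite nadd0l, naddNr in X. exact X.
Qed.

Lemma proj2_ideal (A : NM -> Prop) : ideal A -> ideal (fun y => A (nzero N, y)).
Proof.
  intros HA. assert (HA' := HA). destruct HA' as [[H0 [Hadd [Hopp Hconj]]] [Hl Hr]].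
  split; [split; [|split; [|split]]|split].
  - exact H0.
  - intros a b Ha Hb. assert (X := Hadd _ _ Ha Hb). simpl in X. rewrite nadd0l in X. exact X.
  - intros a Ha. assert (X := Hopp _ Ha). simpl in X. rewrite nopp0 in X. exact X.
  - intros n i Hi. assert (X := Hconj (nzero N, n) _ Hi). simpl in X.
    rewrite nadd0l, nadd0l, nopp0 in X. exact X.
  - intros n i Hi. assert (X := Hl (nzero N, n) _ Hi). simpl in X. rewrite nmul0l in X. exact X.
  - intros n m i Hi. assert (X := Hr (nzero N, n) (nzero N, m) _ Hi). simpl in X.
    rewrite nadd0l, naddNr in X. exact X.
Qed.

Lemma proj1_mem (A : NM -> Prop) x y : ideal A -> A (x, y) -> A (x, nzero M).
Proof.
  intros HA H. assert (X := @ideal_mull NM A (none N, nzero M) (x,y) HA H). simpl in X.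
  rewrite nmul1l, nmul0l in X. exact X.
Qed.

Lemma proj2_mem (A : NM -> Prop) x y : ideal A -> A (x, y) -> A (nzero N, y).
Proof.
  intros HA H. assert (X := @ideal_mull NM A (nzero N, none M) (x,y) HA H). simpl in X.
  rewrite nmul1l, nmul0l in X. exact X.
Qed.

Lemma pair_mem (A : NM -> Prop) x y : ideal A -> A (x, nzero M) -> A (nzero N, y) -> A (x, y).
Proof.
  intros [[_ [Hadd _]] _] H1 H2. assert (X := Hadd _ _ H1 H2). simpl in X.
  rewrite nadd0l, nadd0r in X. exact X.
Qed.

End Prod.
Section Main.
Variables (G : monoid) (N M : nearring) (Ng : G -> N -> Prop) (Mg : G -> M -> Prop).
Hypothesis HN : graded Ng.
Hypothesis HM : graded Mg.
Notation NM := (prod_nearring N M).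

Definition liftL (A : N -> Prop) : NM -> Prop := fun z => A (fst z).
Definition liftR (A : M -> Prop) : NM -> Prop := fun z => A (snd z).

Lemma ideal_liftL P : ideal P -> ideal (liftL P).
Proof.
  intros [[H0 [Hadd [Hopp Hconj]]] [Hl Hr]]. unfold liftL.
  split; [split; [|split; [|split]]|split]; simpl; intros; auto.
Qed.

Lemma ideal_liftR P : ideal P -> ideal (liftR P).
Proof.
  intros [[H0 [Hadd [Hopp Hconj]]] [Hl Hr]]. unfold liftR.
  split; [split; [|split; [|split]]|split]; simpl; intros; auto.
Qed.

Lemma prime_liftL P : graded_prime Ng P -> graded_prime (prod_grading Ng Mg) (liftL P).
Proof.
  intros [HPg [HPp HPpr]]. split; [|split].
  - apply gi_prod with P (fun _ => True); auto.
    + intro z; unfold liftL; tauto.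
    + apply ideal_liftL. apply HPg.
    + apply full_gi_M; auto.
  - intro H. apply HPp. intro x. apply (H (x, nzero M)).
  - intros A B g h HA HB H.
    destruct (HPpr (fun x => A (x, nzero M)) (fun x => B (x, nzero M)) g h
      (proj1_ideal HA) (proj1_ideal HB)) as [L|L].
    + intros a b [Ha Hga] [Hb Hgb].
      destruct (H (a, nzero M) (b, nzero M)) as [X [Y _]].
      split; [exact Ha | split; [exact Hga | apply (g0 HM)]].
      split; [exact Hb | split; [exact Hgb | apply (g0 HM)]].
      split; auto.
    + left. intros [a1 a2] [Ha [Hg1 Hg2]]. simpl in *.
      destruct (L a1) as [X Y]. split; auto. apply proj1_mem with a2; auto.
      split; [exact X | split; auto].
    + right. intros [a1 a2] [Ha [Hg1 Hg2]]. simpl in *.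
      destruct (L a1) as [X Y]. split; auto. apply proj1_mem with a2; auto.
      split; [exact X | split; auto].
Qed.

Lemma prime_liftR P : graded_prime Mg P -> graded_prime (prod_grading Ng Mg) (liftR P).
Proof.
  intros [HPg [HPp HPpr]]. split; [|split].
  - apply gi_prod with (fun _ => True) P; auto.
    + intro z; unfold liftR; tauto.
    + apply ideal_liftR. apply HPg.
    + apply full_gi_N; auto.
  - intro H. apply HPp. intro x. apply (H (nzero N, x)).
  - intros A B g h HA HB H.
    destruct (HPpr (fun x => A (nzero N, x)) (fun x => B (nzero N, x)) g h
      (proj2_ideal HA) (proj2_ideal HB)) as [L|L].
    + intros a b [Ha Hga] [Hb Hgb].
      destruct (H (nzero N, a) (nzero N, b)) as [X [_ Y]].
      split; [exact Ha | split; [apply (g0 HN) | exact Hga]].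
      split; [exact Hb | split; [apply (g0 HN) | exact Hgb]].
      split; auto.
    + left. intros [a1 a2] [Ha [Hg1 Hg2]]. simpl in *.
      destruct (L a2) as [X Y]. split; auto. apply proj2_mem with a1; auto.
      split; [exact X | split; auto].
    + right. intros [a1 a2] [Ha [Hg1 Hg2]]. simpl in *.
      destruct (L a2) as [X Y]. split; auto. apply proj2_mem with a1; auto.
      split; [exact X | split; auto].
Qed.

Lemma prodset_app (L1 L2 : list (NM -> Prop)) z :
  prodset (L1 ++ L2) z <-> exists a b, prodset L1 a /\ prodset L2 b /\ z = nmul a b.
Proof.
  revert z. induction L1 as [|A L1 IH]; intro z; cbn [app prodset].
  - split.
    + intro H. exists (none NM), z. split; [reflexivity|split; [auto|symmetry; apply nmul1l]].
    + intros [a [b [-> [H ->]]]]. rewrite nmul1l. exact H.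
  - split.
    + intros [a [b [Ha [Hb ->]]]]. apply IH in Hb. destruct Hb as [c [d [Hc [Hd ->]]]].
      exists (nmul a c), d. split; [|split]; auto. exists a, c; auto. apply nmulA.
    + intros [a [b [[c [d [Hc [Hd ->]]]] [Hb ->]]]]. exists c, (nmul d b).
      split; auto. split. apply IH. exists d, b; auto. symmetry; apply nmulA.
Qed.

Lemma L1 L z : prodset (map liftL L) z -> prodset L (fst z).
Proof.
  revert z; induction L as [|A L IH]; intros z; simpl.
  - intros ->. reflexivity.
  - intros [a [b [Ha [Hb ->]]]]. exists (fst a), (fst b). auto.
Qed.

Lemma L2 L x : prodset L x -> prodset (map liftL L) ((x, none M) : NM).
Proof.
  revert x; induction L as [|A L IH]; intros x; simpl.
  - intros ->. reflexivity.
  - intros [a [b [Ha [Hb ->]]]]. exists (a, none M), (b, none M). split; auto. split; auto.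
    simpl. rewrite nmul1l. auto.
Qed.

Lemma L3 P L x y : prodset (P :: L) x -> prodset (map liftL (P :: L)) ((x, y) : NM).
Proof.
  intros [a [b [Ha [Hb ->]]]]. exists (a, y), (b, none M). split; auto. split. apply L2; auto.
  simpl. rewrite nmul1r. auto.
Qed.

Lemma R1 L z : prodset (map liftR L) z -> prodset L (snd z).
Proof.
  revert z; induction L as [|A L IH]; intros z; simpl.
  - intros ->. reflexivity.
  - intros [a [b [Ha [Hb ->]]]]. exists (snd a), (snd b). auto.
Qed.

Lemma R2 L x : prodset L x -> prodset (map liftR L) ((none N, x) : NM).
Proof.
  revert x; induction L as [|A L IH]; intros x; simpl.
  - intros ->. reflexivity.
  - intros [a [b [Ha [Hb ->]]]]. exists (none N, a), (none N, b). split; auto. split; auto.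
    simpl. rewrite nmul1l. auto.
Qed.

Lemma R3 P L x y : prodset (P :: L) y -> prodset (map liftR (P :: L)) ((x, y) : NM).
Proof.
  intros [a [b [Ha [Hb ->]]]]. exists (x, a), (none N, b). split; auto. split. apply R2; auto.
  simpl. rewrite nmul1r. auto.
Qed.

End Main.

Theorem corollary2p19 (G : monoid) (N M : nearring)
  (Ng : G -> N -> Prop) (Mg : G -> M -> Prop) :
  graded Ng -> graded Mg ->
  (forall I : N -> Prop, ideal I -> proper I -> prod_of_graded_primes Ng I) ->
  (forall I : M -> Prop, ideal I -> proper I -> prod_of_graded_primes Mg I) ->
  forall I : prod_nearring N M -> Prop, ideal I -> proper I ->
    prod_of_graded_primes (prod_grading Ng Mg) I.
Proof.
  intros HN HM HIN HIM I HI Hp.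
  set (I1 := fun x => I (x, nzero M)). set (I2 := fun y => I (nzero N, y)).
  assert (HI1 : ideal I1) by exact (proj1_ideal HI).
  assert (HI2 : ideal I2) by exact (proj2_ideal HI).
  assert (Hiff : forall x y, I (x, y) <-> I1 x /\ I2 y).
  { intros x y; split.
    - intro H; split; [exact (proj1_mem x y HI H) | exact (proj2_mem x y HI H)].
    - intros [A B]; exact (pair_mem x y HI A B). }
  destruct (classic (proper I1)) as [P1|P1]; destruct (classic (proper I2)) as [P2|P2].
  - destruct (HIN I1 HI1 P1) as [P [Ps [HF HE]]].
    destruct (HIM I2 HI2 P2) as [Q [Qs [HF' HE']]].
    exists (@liftL N M P), (map (@liftL N M) Ps ++ @liftR N M Q :: map (@liftR N M) Qs).
    split.
    + inversion HF; subst. inversion HF'; subst. constructor. apply prime_liftL; auto.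
      apply Forall_app. split.
      * rewrite Forall_forall in *. intros A HA. apply in_map_iff in HA.
        destruct HA as [B [<- HB]]. apply prime_liftL; auto.
      * constructor. apply prime_liftR; auto. rewrite Forall_forall in *. intros A HA.
        apply in_map_iff in HA. destruct HA as [B [<- HB]]. apply prime_liftR; auto.
    + intros [x y]. change (@liftL N M P :: map (@liftL N M) Ps ++ @liftR N M Q :: map (@liftR N M) Qs)
        with (map (@liftL N M) (P :: Ps) ++ map (@liftR N M) (Q :: Qs)).
      rewrite prodset_app, Hiff. split.
      * intros [Hx Hy]. apply HE in Hx. apply HE' in Hy.
        exists (x, none M), (none N, y). split. apply L2; auto. split. apply R2; auto.
        simpl. rewrite nmul1r, nmul1l. auto.
      * intros [[a1 a2] [[b1 b2] [Ha [Hb E]]]]. apply L1 in Ha. apply R1 in Hb.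
        simpl in *. apply HE in Ha. apply HE' in Hb. injection E as -> ->. split.
        apply ideal_mulr; auto. apply ideal_mull; auto.
  - destruct (HIN I1 HI1 P1) as [P [Ps [HF HE]]].
    exists (@liftL N M P), (map (@liftL N M) Ps). split.
    + change (Forall (graded_prime (prod_grading Ng Mg)) (map (@liftL N M) (P :: Ps))).
      rewrite Forall_forall in *. intros A HA. apply in_map_iff in HA.
      destruct HA as [B [<- HB]]. apply prime_liftL; auto.
    + intros [x y]. change (@liftL N M P :: map (@liftL N M) Ps) with (map (@liftL N M) (P :: Ps)).
      rewrite Hiff. split.
      * intros [Hx _]. apply HE in Hx. apply L3; auto.
      * intro H. apply L1 in H. simpl in H. apply HE in H. split; auto.
        apply NNPP. intro C. apply P2. intro E. apply C. apply E.
  - destruct (HIM I2 HI2 P2) as [Q [Qs [HF HE]]].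
    exists (@liftR N M Q), (map (@liftR N M) Qs). split.
    + change (Forall (graded_prime (prod_grading Ng Mg)) (map (@liftR N M) (Q :: Qs))).
      rewrite Forall_forall in *. intros A HA. apply in_map_iff in HA.
      destruct HA as [B [<- HB]]. apply prime_liftR; auto.
    + intros [x y]. change (@liftR N M Q :: map (@liftR N M) Qs) with (map (@liftR N M) (Q :: Qs)).
      rewrite Hiff. split.
      * intros [_ Hy]. apply HE in Hy. apply R3; auto.
      * intro H. apply R1 in H. simpl in H. apply HE in H. split; auto.
        apply NNPP. intro C. apply P1. intro E. apply C. apply E.
  - exfalso. apply Hp. intros [x y]. apply Hiff. split.
    + apply NNPP. intro C. apply P1. intro E. apply C. apply E.
    + apply NNPP. intro C. apply P2. intro E. apply C. apply E.
Qed.
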